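(* For any $1\le q\le\mathsf n-1$, \[\big|\log\mathbb P_{\pi_V}(X_q\mid X_{q+1:\mathsf n})\big|\le\log(\nu_q^{-1}),\] and for all $\ell\ge1$ and $1\le q\le\mathsf n-1$, \[\big|\log\mathbb P_{\pi_V}(X_q\mid X_{q+1:\mathsf n})-\log\mathbb P_{\pi_V}(X_q\mid X_{q+1:\mathsf n+\ell})\big|\le\nu_q^{-1}\prod_{k=q+1}^{\mathsf n-1}(1-\nu_k),\] with the convention that an empty product equals $1$. These bounds hold for every realization of the observations.
   Context: $\pi_V$ is a probability distribution on a measurable space $\mathbb V$, $\mathbb X$ a discrete set, and $K_i:\mathbb X\times\mathbb V^2\to[0,\infty)$ ($i\ge1$) are such that each $K_i(\cdot,v,w)$ is a probability on $\mathbb X$. For any length $m\ge1$, $\mathbb P_{\pi_V}$ denotes the law of $(V_{1:m+1},X_{1:m})$ where $V_i$ are i.i.d. $\pi_V$ and, given $V$, the $X_i$ are independent with $\mathbb P(X_i=x\mid V)=K_i(x,V_i,V_{i+1})$ (these laws are consistent in $m$); $\mathbb P_{\pi_V}(X_q\mid X_{q+1:m})$ is the conditional probability of the observed value of $X_q$ given the observed $X_{q+1:m}$. Assumption H2: there exist $\nu_i>0$ with $\nu_i\le K_i(x,v,w)\le1$ for all $x,i,v,w$. *)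

(* Defs.v *)
From HB Require Import structures.
From mathcomp Require Import all_boot all_order all_algebra.
From mathcomp Require Import all_classical all_reals all_analysis.
Set Implicit Arguments. Unset Strict Implicit. Unset Printing Implicit Defensive.
Import Order.TTheory GRing.Theory Num.Theory.
Local Open Scope ring_scope.
Local Open Scope ereal_scope.

Fixpoint iint (R : realType) (d : measure_display) (V : measurableType d)
  (P : probability V R) (n : nat) (f : seq V -> \bar R) : \bar R :=
  match n with
  | 0 => f [::]
  | n'.+1 => \int[P]_v iint P n' (fun s => f (v :: s))
  end.

(* P_{pi_V}(X_a = x_a, ..., X_b = x_b) (a <= b): only V_a, ..., V_{b+1} are
   involved, they are i.i.d. pi_V, and given V the X_i are independent with
   P(X_i = x | V) = K i x V_i V_{i+1}.  The coordinate s_j of s stands for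
   V_{a+j}. *)
Definition obs_prob (R : realType) (d : measure_display) (V : measurableType d)
  (X : Type) (P : probability V R) (K : nat -> X -> V -> V -> R)
  (x : nat -> X) (a b : nat) : \bar R :=
  iint P (b - a).+2 (fun s =>
    (\prod_(a <= i < b.+1)
        K i (x i) (nth point s (i - a)) (nth point s (i - a).+1))%:E).

Definition cond_prob (R : realType) (d : measure_display) (V : measurableType d)
  (X : Type) (P : probability V R) (K : nat -> X -> V -> V -> R)
  (x : nat -> X) (q m : nat) : R :=
  (fine (obs_prob P K x q m) / fine (obs_prob P K x q.+1 m))%R.

(* Main.v *)
Require Import Defs.
From HB Require Import structures.
From mathcomp Require Import all_boot all_order all_algebra.
From mathcomp Require Import all_classical all_reals all_analysis.
From mathcomp Require Import measurable_realfun.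
From mathcomp Require Import ring lra zify.
Import Order.TTheory GRing.Theory Num.Theory.
Local Open Scope ring_scope.
Set Implicit Arguments.

Section Tool.
Context (R : realType) (d : measure_display) (V : measurableType d)
  (P : probability V R).

Definition bm (f : V -> R) :=
  measurable_fun setT f /\ exists M, forall v, `|f v| <= M.

Lemma bm_bounded f : bm f -> [bounded f x | x in setT].
Proof.
move=> [_ [M HM]]; exists M; split; first exact: num_real.
by move=> y My x _ /=; apply: le_trans (HM x) (ltW My).
Qed.

Lemma bm_int f : bm f -> P.-integrable setT (EFin \o f).
Proof.
move=> hf; apply: measurable_bounded_integrable.
- exact: measurableT.
- by apply: (@le_lt_trans _ _ 1%E); [rewrite le_eqVlt; apply/orP; left; apply/eqP; exact: probability_setT | exact: ltry].
- by case: hf.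
- exact: bm_bounded.
Qed.

Lemma IE f : bm f -> (\int[P]_v (f v)%:E)%E = (\int[P]_v f v)%:E.
Proof.
move=> hf; rewrite /Rintegral fineK //.
by have := integrable_fin_num measurableT (bm_int hf).
Qed.

Lemma I_le f g : bm f -> bm g -> (forall v, f v <= g v) ->
  \int[P]_v f v <= \int[P]_v g v.
Proof.
move=> hf hg fg; apply: le_Rintegral => //; try exact: bm_int.
Qed.

Lemma I_cst c : \int[P]_v c = c.
Proof.
rewrite Rintegral_cst // (_ : fine _ = 1) ?mulr1 //.
by transitivity (fine (1%E : \bar R)) => //; congr fine; exact: probability_setT.
Qed.

Lemma I_lin f g c : bm f -> bm g ->
  \int[P]_v (f v - c * g v) = \int[P]_v f v - c * \int[P]_v g v.
Proof.
move=> hf hg; rewrite RintegralB //; first by rewrite RintegralZl //; exact: bm_int.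
- exact: bm_int.
- apply: (bm_int (f := fun v => c * g v)); split.
  + by apply: measurable_realfun.measurable_funM => //; case: hg.
  + case: hg => _ [M HM]; exists (`|c| * M) => v; rewrite normrM.
    by apply: ler_wpM2l => //.
Qed.

Lemma I_scale f c : bm f -> \int[P]_v (c * f v) = c * \int[P]_v f v.
Proof. by move=> hf; rewrite RintegralZl //; exact: bm_int. Qed.

Lemma bm_cst c : bm (fun _ => c).
Proof. by split; [exact: measurable_cst | exists `|c|]. Qed.

Lemma bm_mul f g : bm f -> bm g -> bm (fun v => f v * g v).
Proof.
move=> [mf [M HM]] [mg [N HN]]; split; first exact: measurable_realfun.measurable_funM.
exists (M * N) => v; rewrite normrM; apply: ler_pM => //.
Qed.

Lemma bm_sub f g : bm f -> bm g -> bm (fun v => f v - g v).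
Proof.
move=> [mf [M HM]] [mg [N HN]]; split; first exact: measurable_realfun.measurable_funB.
exists (M + N) => v; apply: le_trans (ler_normB _ _) _; exact: lerD.
Qed.


Definition bm2 (F : V * V -> R) :=
  [/\ measurable_fun setT F, (forall p, 0 <= F p) & exists M, forall p, F p <= M].

Lemma bm2_sec1 F u : bm2 F -> bm (fun w => F (u, w)).
Proof.
move=> [mF F0 [M HM]]; split; first exact: measurable_fun_pair2.
by exists M => w; rewrite ger0_norm.
Qed.

Lemma bm2_sec2 F w : bm2 F -> bm (fun u => F (u, w)).
Proof.
move=> [mF F0 [M HM]]; split; first exact: measurable_fun_pair1.
by exists M => u; rewrite ger0_norm.
Qed.

Lemma I_ge0 f : (forall v, 0 <= f v) -> 0 <= \int[P]_v f v.
Proof. by move=> f0; apply: Rintegral_ge0 => v _. Qed.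

Lemma I_leM f M : bm f -> (forall v, f v <= M) -> \int[P]_v f v <= M.
Proof. by move=> hf fM; rewrite -[X in _ <= X](I_cst M); apply: I_le => //; exact: bm_cst. Qed.

Lemma bm2_pint1 F : bm2 F -> bm (fun u => \int[P]_w F (u, w)).
Proof.
move=> hF; have [mF F0 [M HM]] := hF; split.
  rewrite /Rintegral.
  apply: (@measurableT_comp _ _ _ _ _ _ fine); first exact: measurable_realfun.fine_measurable.
  apply: (measurable_fun_fubini_tonelli_F (EFin \o F)); first exact/measurable_EFinP.
  by move=> p; rewrite lee_fin.
exists M => u; rewrite ger0_norm; last exact: I_ge0.
by apply: I_leM; [exact: bm2_sec1 | move=> w; exact: HM].
Qed.

Lemma bm2_pint2 F : bm2 F -> bm (fun w => \int[P]_u F (u, w)).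
Proof.
move=> hF; have [mF F0 [M HM]] := hF; split.
  rewrite /Rintegral.
  apply: (@measurableT_comp _ _ _ _ _ _ fine); first exact: measurable_realfun.fine_measurable.
  apply: (measurable_fun_fubini_tonelli_G (EFin \o F)); first exact/measurable_EFinP.
  by move=> p; rewrite lee_fin.
exists M => u; rewrite ger0_norm; last exact: I_ge0.
by apply: I_leM; [exact: bm2_sec2 | move=> w; exact: HM].
Qed.

Lemma I_swap F : bm2 F ->
  \int[P]_u (\int[P]_w F (u, w)) = \int[P]_w (\int[P]_u F (u, w)).
Proof.
move=> hF; apply: EFin_inj; rewrite -IE; last exact: bm2_pint1.
rewrite -IE; last exact: bm2_pint2.
transitivity (\int[P]_u \int[P]_w (F (u, w))%:E)%E.
  by apply: eq_integral => u _; rewrite IE //; exact: bm2_sec1.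
transitivity (\int[P]_w \int[P]_u (F (u, w))%:E)%E.
  have [mF F0 _] := hF.
  apply: (fubini_tonelli (EFin \o F)); first exact/measurable_EFinP.
  by move=> p; rewrite lee_fin.
by apply: eq_integral => w _; rewrite IE //; exact: bm2_sec2.
Qed.

End Tool.
Arguments bm {R d V} f.
Arguments bm2 {R d V} F.

Section Model.
Context (R : realType) (d : measure_display) (V : measurableType d)
  (P : probability V R) (X : Type) (K : nat -> X -> V -> V -> R)
  (nu : nat -> R)
  (HKmeas : forall i x, (1 <= i)%N ->
     measurable_fun setT (fun vw : V * V => K i x vw.1 vw.2))
  (Hnu : forall i, (1 <= i)%N -> 0 < nu i)
  (H2 : forall i x v w, (1 <= i)%N -> nu i <= K i x v w <= 1)
  (x : nat -> X).

Lemma bm2_mul (F G : V * V -> R) : bm2 F -> bm2 G -> bm2 (fun p => F p * G p).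
Proof.
move=> [mF F0 [M HM]] [mG G0 [N HN]]; split.
- exact: measurable_funM.
- by move=> p; rewrite mulr_ge0.
- exists (M * N) => p; apply: ler_pM => //.
Qed.

Lemma bm2_fst (g : V -> R) : bm g -> (forall v, 0 <= g v) -> bm2 (fun p => g p.1).
Proof.
move=> [mg [M HM]] g0; split => //.
- exact: measurableT_comp.
- by exists M => p; apply: le_trans (HM p.1); exact: ler_norm.
Qed.

Lemma bm2_snd (g : V -> R) : bm g -> (forall v, 0 <= g v) -> bm2 (fun p => g p.2).
Proof.
move=> [mg [M HM]] g0; split => //.
- exact: measurableT_comp.
- by exists M => p; apply: le_trans (HM p.2); exact: ler_norm.
Qed.

Lemma K_ge0 j a u w : (1 <= j)%N -> 0 <= K j a u w.
Proof. by move=> j1; have /andP[h _] := H2 j a u w j1; apply: le_trans h; apply/ltW/Hnu. Qed.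

Lemma K_le1 j a u w : (1 <= j)%N -> K j a u w <= 1.
Proof. by move=> j1; have /andP[_ h] := H2 j a u w j1. Qed.

Lemma K_genu j a u w : (1 <= j)%N -> nu j <= K j a u w.
Proof. by move=> j1; have /andP[h _] := H2 j a u w j1. Qed.

Lemma nu_le1 j : (1 <= j)%N -> nu j <= 1.
Proof. move=> j1; have /andP[h1 h2] := H2 j (x j) point point j1; exact: le_trans h1 h2. Qed.

Lemma bm2_K j : (1 <= j)%N -> bm2 (fun p : V * V => K j (x j) p.1 p.2).
Proof.
move=> j1; split; first exact: HKmeas.
- by move=> p; exact: K_ge0.
- by exists 1 => p; exact: K_le1.
Qed.

Fixpoint Hk (k j : nat) (u : V) : R :=
  match k with
  | 0 => 1
  | k'.+1 => \int[P]_w (K j (x j) u w * Hk k' j.+1 w)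
  end.

Lemma Hk_prop k j : (1 <= j)%N ->
  [/\ bm (Hk k j), (forall u, 0 <= Hk k j u <= 1) &
      exists c, 0 < c /\ forall u, c <= Hk k j u].
Proof.
elim: k j => [|k IH] j j1.
  split; [exact: bm_cst | by move=> u; rewrite /= ler01 lexx | by exists 1; split].
have [hb hr [c [c0 hc]]] := IH j.+1 isT.
have hF : bm2 (fun p : V * V => K j (x j) p.1 p.2 * Hk k j.+1 p.2).
  apply: bm2_mul; first exact: bm2_K.
  by apply: bm2_snd => // v; have /andP[] := hr v.
have hsec u : bm (fun w => K j (x j) u w * Hk k j.+1 w).
  exact: (bm2_sec1 u hF).
split.
- exact: (bm2_pint1 P hF).
- move=> u /=; apply/andP; split.
    apply: I_ge0 => w; apply: mulr_ge0; first exact: K_ge0.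
    by have /andP[] := hr w.
  apply: I_leM => // w; rewrite -[1]mulr1; apply: ler_pM.
  + exact: K_ge0.
  + by have /andP[] := hr w.
  + exact: K_le1.
  + by have /andP[] := hr w.
- exists (nu j * c); split; first by rewrite mulr_gt0 // Hnu.
  move=> u /=; rewrite -[X in X <= _](I_cst P); apply: I_le => //.
    exact: bm_cst.
  move=> w; apply: ler_pM => //.
  + by apply/ltW/Hnu.
  + exact/ltW.
  + exact: K_genu.
Qed.


Lemma iint_Hk k j c u : (1 <= j)%N -> 0 <= c ->
  iint P k (fun s => (c * \prod_(j <= i < j + k)
     K i (x i) (nth point (u :: s) (i - j)) (nth point (u :: s) (i - j).+1))%:E)
  = (c * Hk k j u)%:E.
Proof.
elim: k j c u => [|k IH] j c u j1 c0.
  by rewrite /= addn0 big_geq.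
have hr := Hk_prop k j.+1 isT.
have [hb hr01 _] := hr.
rewrite /=.
transitivity (\int[P]_w ((c * K j (x j) u w) * Hk k j.+1 w)%:E)%E.
  apply: eq_integral => w _.
  rewrite -IH //; last by rewrite mulr_ge0 // K_ge0.
  congr (iint P k); apply: funext => s.
  rewrite big_ltn; last by rewrite -addn1 leq_add2l.
  rewrite subnn /= -mulrA; congr ((_ * (_ * _))%:E).
  rewrite addSnnS; apply: eq_big_nat => i /andP[ji _].
  by rewrite (_ : i - j = (i - j.+1).+1)%N //; rewrite subnSK.
have hs : bm (fun w => K j (x j) u w * Hk k j.+1 w).
  apply: bm_mul => //; exact: (bm2_sec1 u (bm2_K j j1)).
rewrite -I_scale //; rewrite -IE; last first.
  by apply: bm_mul => //; exact: bm_cst.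
by apply: eq_integral => w _; rewrite mulrA.
Qed.


Definition fstep (g : V -> R) j (w : V) := \int[P]_u (g u * K j (x j) u w).

Fixpoint fw (g : V -> R) j t : V -> R :=
  match t with
  | 0 => g
  | t'.+1 => fw (fstep g j) j.+1 t'
  end.

Definition nn (g : V -> R) := bm g /\ forall v, 0 <= g v.

Lemma fstep_nn g j : (1 <= j)%N -> nn g -> nn (fstep g j).
Proof.
move=> j1 [hg g0].
have hF : bm2 (fun p : V * V => g p.1 * K j (x j) p.1 p.2).
  by apply: bm2_mul; [exact: bm2_fst | exact: bm2_K].
split; first exact: (bm2_pint2 P hF).
by move=> w; apply: I_ge0 => u; rewrite mulr_ge0 // K_ge0.
Qed.

Lemma fw_nn g j t : (1 <= j)%N -> nn g -> nn (fw g j t).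
Proof.
elim: t g j => [|t IH] g j j1 hg //=.
by apply: IH => //; exact: fstep_nn.
Qed.

Lemma I_step g k j : (1 <= j)%N -> nn g ->
  \int[P]_u (g u * Hk k.+1 j u) = \int[P]_w (fstep g j w * Hk k j.+1 w).
Proof.
move=> j1 [hg g0].
have [hb hr _] := Hk_prop k j.+1 isT.
have hK := bm2_K j j1.
have hF : bm2 (fun p : V * V => g p.1 * (K j (x j) p.1 p.2 * Hk k j.+1 p.2)).
  apply: bm2_mul; first exact: bm2_fst.
  apply: bm2_mul => //; apply: bm2_snd => // v; by have /andP[] := hr v.
transitivity (\int[P]_u (\int[P]_w (g u * (K j (x j) u w * Hk k j.+1 w)))).
  apply: eq_Rintegral => u _ /=; rewrite I_scale //.
  by apply: bm_mul => //; exact: (bm2_sec1 u hK).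
rewrite (I_swap P hF); apply: eq_Rintegral => w _ /=.
rewrite /fstep mulrC -I_scale; last first.
  by apply: bm_mul; [exact: hg | exact: (bm2_sec2 w hK)].
by apply: eq_Rintegral => u _; rewrite mulrA mulrC mulrA.
Qed.

Lemma I_transport t g j k : (1 <= j)%N -> nn g ->
  \int[P]_u (g u * Hk (t + k) j u) = \int[P]_w (fw g j t w * Hk k (j + t) w).
Proof.
elim: t g j => [|t IH] g j j1 hg; first by rewrite add0n addn0.
rewrite addSn I_step // IH //; last exact: fstep_nn.
by rewrite addSnnS.
Qed.


Lemma fstep_lb g j w : (1 <= j)%N -> nn g -> nu j * \int[P]_u g u <= fstep g j w.
Proof.
move=> j1 [hg g0]; have hK := bm2_K j j1.
rewrite -I_scale //; apply: I_le.
- by apply: bm_mul => //; exact: bm_cst.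
- by apply: bm_mul => //; exact: (bm2_sec2 w hK).
- by move=> u; rewrite mulrC ler_wpM2l // K_genu.
Qed.

Lemma I_fstep_gt0 g j : (1 <= j)%N -> nn g -> 0 < \int[P]_u g u ->
  0 < \int[P]_w fstep g j w.
Proof.
move=> j1 hg Ig; have [hs _] : nn (fstep g j) by exact: fstep_nn.
apply: (@lt_le_trans _ _ (nu j * \int[P]_u g u)); first by rewrite mulr_gt0 // Hnu.
rewrite -[X in X <= _](I_cst P); apply: I_le => //; first exact: bm_cst.
by move=> w; exact: fstep_lb.
Qed.

Lemma contract1 ga gb j al be : (1 <= j)%N -> nn ga -> nn gb ->
  0 < \int[P]_u gb u -> (forall v, al * gb v <= ga v <= be * gb v) ->
  exists al' be', [/\ al <= al', al' <= be', be' <= be,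
    be' - al' = (1 - nu j) * (be - al) &
    forall w, al' * fstep gb j w <= fstep ga j w <= be' * fstep gb j w].
Proof.
move=> j1 [hga ga0] [hgb gb0] Bpos hab.
have hK := bm2_K j j1.
set A := \int[P]_u ga u; set B := \int[P]_u gb u.
have hlo : al * B <= A.
  rewrite /B -I_scale //; apply: I_le => //; first by apply: bm_mul => //; exact: bm_cst.
  by move=> v; have /andP[] := hab v.
have hhi : A <= be * B.
  rewrite /B -I_scale //; apply: I_le => //; first by apply: bm_mul => //; exact: bm_cst.
  by move=> v; have /andP[] := hab v.
set cs := A / B.
have csB : cs * B = A by rewrite /cs divfK // gt_eqF.
have alcs : al <= cs by rewrite /cs ler_pdivlMr.
have csbe : cs <= be by rewrite /cs ler_pdivrMr.
have nu0 : 0 <= nu j by apply/ltW/Hnu.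
have nu1 : nu j <= 1 by apply: nu_le1.
exists (al + nu j * (cs - al)), (be - nu j * (be - cs)); split.
- by rewrite lerDl mulr_ge0 // subr_ge0.
- rewrite -subr_ge0.
  have : 0 <= (1 - nu j) * (be - al) by rewrite mulr_ge0 // subr_ge0 // (le_trans alcs).
  lra.
- by rewrite gerBl mulr_ge0 // subr_ge0.
- ring.
move=> w.
set a' := fstep ga j w; set b' := fstep gb j w.
have hsec : bm (fun u => K j (x j) u w) := bm2_sec2 w hK.
have hbk : bm (fun u => gb u * K j (x j) u w) by exact: bm_mul.
have hak : bm (fun u => ga u * K j (x j) u w) by exact: bm_mul.
have b'B : b' <= B.
  apply: I_le => // u; rewrite -[X in _ <= X]mulr1 ler_wpM2l //; exact: K_le1.
have b'0 : 0 <= b' by apply: I_ge0 => u; rewrite mulr_ge0 // K_ge0.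
have hd : bm (fun u => ga u - al * gb u).
  by apply: bm_sub => //; apply: bm_mul => //; exact: bm_cst.
have he : bm (fun u => be * gb u - ga u).
  by apply: bm_sub => //; apply: bm_mul => //; exact: bm_cst.
have L1 : nu j * (A - al * B) <= a' - al * b'.
  have -> : a' - al * b' = \int[P]_u ((ga u - al * gb u) * K j (x j) u w).
    rewrite -I_lin //; apply: eq_Rintegral => u _; ring.
  have -> : A - al * B = \int[P]_u (ga u - al * gb u) by rewrite I_lin.
  rewrite -I_scale; last exact: hd.
  apply: I_le.
  - by apply: bm_mul; [exact: bm_cst | exact: hd].
  - by apply: bm_mul => //; exact: hd.
  - move=> u; rewrite mulrC; apply: ler_wpM2l; last exact: K_genu.
    by rewrite subr_ge0; have /andP[] := hab u.
have U1 : nu j * (be * B - A) <= be * b' - a'.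
  have -> : be * b' - a' = \int[P]_u ((be * gb u - ga u) * K j (x j) u w).
    have hbk' : bm (fun u => be * (gb u * K j (x j) u w)).
      by apply: bm_mul => //; exact: bm_cst.
    have -> : be * b' - a' =
        \int[P]_u (be * (gb u * K j (x j) u w) - 1 * (ga u * K j (x j) u w)).
      by rewrite I_lin // I_scale // mul1r.
    apply: eq_Rintegral => u _ /=; ring.
  have -> : be * B - A = \int[P]_u (be * gb u - ga u).
    have hbk' : bm (fun u => be * gb u).
      by apply: bm_mul => //; exact: bm_cst.
    have -> : be * B - A = \int[P]_u (be * gb u - 1 * ga u).
      by rewrite I_lin // I_scale // mul1r.
    apply: eq_Rintegral => u _ /=; ring.
  rewrite -I_scale; last exact: he.
  apply: I_le.
  - by apply: bm_mul; [exact: bm_cst | exact: he].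
  - by apply: bm_mul => //; exact: he.
  - move=> u; rewrite mulrC; apply: ler_wpM2l; last exact: K_genu.
    by rewrite subr_ge0; have /andP[] := hab u.
have P1 : 0 <= nu j * (cs - al) * (B - b').
  by rewrite !mulr_ge0 // subr_ge0.
have P2 : 0 <= nu j * (be - cs) * (B - b').
  by rewrite !mulr_ge0 // subr_ge0.
apply/andP; split.
- have : nu j * (A - al * B) = nu j * (cs - al) * B by rewrite -csB; ring.
  nra.
- have : nu j * (be * B - A) = nu j * (be - cs) * B by rewrite -csB; ring.
  nra.
Qed.


Lemma contract t ga gb j al be : (1 <= j)%N -> nn ga -> nn gb ->
  0 < \int[P]_u gb u -> (forall v, al * gb v <= ga v <= be * gb v) -> al <= be ->
  exists al' be', [/\ al <= al', al' <= be', be' <= be,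
    be' - al' <= (\prod_(j <= i < j + t) (1 - nu i)) * (be - al) &
    forall w, al' * fw gb j t w <= fw ga j t w <= be' * fw gb j t w].
Proof.
elim: t ga gb j al be => [|t IH] ga gb j al be j1 hga hgb Bpos hab albe.
  exists al, be; split => //; by rewrite addn0 big_geq // mul1r.
have [al1 [be1 [h1 h2 h3 h4 h5]]] := contract1 j al be j1 hga hgb Bpos hab.
have [al' [be' [g1 g2 g3 g4 g5]]] :=
  IH (fstep ga j) (fstep gb j) j.+1 al1 be1 isT (fstep_nn j j1 hga) (fstep_nn j j1 hgb)
    (I_fstep_gt0 j j1 hgb Bpos) h5 h2.
exists al', be'; split => //.
- exact: le_trans h1 g1.
- exact: le_trans g3 h3.
- rewrite big_ltn; last by rewrite -addn1 leq_add2l.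
  rewrite -addSnnS; apply: (le_trans g4); rewrite h4; rewrite le_eqVlt; apply/orP; left; apply/eqP; ring.
Qed.


Lemma obs_Hk a b : (1 <= a)%N -> (a <= b)%N ->
  fine (obs_prob P K x a b) = \int[P]_u Hk (b - a).+1 a u.
Proof.
move=> a1 ab; rewrite /obs_prob /=.
rewrite (_ : b.+1 = a + (b - a).+1)%N; last by lia.
have [hb _ _] := Hk_prop (b - a).+1 a a1.
rewrite (_ : (\int[P]_v _)%E = (\int[P]_u Hk (b - a).+1 a u)%:E) //.
rewrite -IE //; apply: eq_integral => v _.
rewrite -[Hk _ _ v]mul1r -iint_Hk //.
rewrite /=; apply: eq_integral => w _; congr (iint P _); apply: funext => s; by rewrite mul1r.
Qed.

Lemma prod_ge0 a b : (1 <= a)%N -> 0 <= \prod_(a <= i < b) (1 - nu i).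
Proof.
move=> a1; rewrite big_nat_cond; apply: prodr_ge0 => i /andP[/andP[ai _] _].
by rewrite subr_ge0 nu_le1 //; apply: leq_trans ai.
Qed.

Lemma cond_bounds q n : (1 <= q)%N -> (q < n)%N ->
  exists al be, [/\ nu q <= al, al <= be, be <= 1,
    be - al <= \prod_(q.+1 <= k < n) (1 - nu k) &
    forall m, (n <= m)%N -> al <= cond_prob P K x q m <= be].
Proof.
move=> q1 qn.
set t := (n - q.+1)%N.
set ga := fstep (fun _ => 1) q.
set gb := fun _ : V => (1 : R).
have hgb : nn gb by split; [exact: bm_cst | move=> v; exact: ler01].
have hga : nn ga by exact: fstep_nn.
have hab : forall v, nu q * gb v <= ga v <= 1 * gb v.
  move=> v; rewrite /gb !mulr1 /ga /fstep; apply/andP; split.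
    rewrite -[X in X <= _](I_cst P); apply: I_le; first exact: bm_cst.
      by apply: bm_mul; [exact: bm_cst | exact: (bm2_sec2 v (bm2_K q q1))].
    by move=> u; rewrite mul1r K_genu.
  apply: I_leM; first by apply: bm_mul; [exact: bm_cst | exact: (bm2_sec2 v (bm2_K q q1))].
  by move=> u; rewrite mul1r K_le1.
have Bpos : 0 < \int[P]_u gb u by rewrite /gb I_cst.
have [al [be [h1 h2 h3 h4 h5]]] := contract t q.+1 (nu q) 1 isT hga hgb Bpos hab (nu_le1 q q1).
exists al, be; split => //.
- apply: (le_trans h4); rewrite (_ : q.+1 + t = n)%N; last by lia.
  rewrite -[X in _ <= X]mulr1; apply: ler_wpM2l; first exact: prod_ge0.
  by rewrite gerBl; apply/ltW/Hnu.
move=> m nm.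
set k := (m - n).+1.
have [hbk hr _] := Hk_prop k n (leq_trans q1 (ltnW qn)).
have hk0 : forall w, 0 <= Hk k n w by move=> w; have /andP[] := hr w.
have Ea : fine (obs_prob P K x q m) = \int[P]_w (fw ga q.+1 t w * Hk k n w).
  rewrite obs_Hk //; last by lia.
  transitivity (\int[P]_u ((fun _ => 1) u * Hk (m - q).+1 q u)).
    by apply: eq_Rintegral => u _; rewrite mul1r.
  rewrite I_step //.
  rewrite (_ : (m - q = t + k)%N); last by lia.
  rewrite I_transport //; by rewrite (_ : q.+1 + t = n)%N; last by lia.
have Eb : fine (obs_prob P K x q.+1 m) = \int[P]_w (fw gb q.+1 t w * Hk k n w).
  rewrite obs_Hk //; last by lia.
  transitivity (\int[P]_u (gb u * Hk (t + k) q.+1 u)).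
    rewrite (_ : ((m - q.+1).+1 = t + k)%N); last by lia.
    by apply: eq_Rintegral => u _; rewrite /gb mul1r.
  rewrite I_transport //; by rewrite (_ : q.+1 + t = n)%N; last by lia.
have [hfa fa0] := fw_nn q.+1 t isT hga.
have [hfb fb0] := fw_nn q.+1 t isT hgb.
have Bm : 0 < fine (obs_prob P K x q.+1 m).
  rewrite obs_Hk //; last by lia.
  have [hbm _ [c [c0 hc]]] := Hk_prop (m - q.+1).+1 q.+1 isT.
  apply: (lt_le_trans c0); rewrite -[X in X <= _](I_cst P); apply: I_le => //.
  exact: bm_cst.
rewrite /cond_prob; rewrite Ea Eb in Bm *.
have hbh : bm (fun w => fw gb q.+1 t w * Hk k n w) by exact: bm_mul.
have hah : bm (fun w => fw ga q.+1 t w * Hk k n w) by exact: bm_mul.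
have hal : bm (fun w => al * (fw gb q.+1 t w * Hk k n w)) by apply: bm_mul => //; exact: bm_cst.
have hbe : bm (fun w => be * (fw gb q.+1 t w * Hk k n w)) by apply: bm_mul => //; exact: bm_cst.
apply/andP; split.
- rewrite ler_pdivlMr // -I_scale //; apply: I_le => // w.
  rewrite mulrA; apply: ler_wpM2r => //; by have /andP[] := h5 w.
- rewrite ler_pdivrMr // -I_scale //; apply: I_le => // w.
  rewrite mulrA; apply: ler_wpM2r => //; by have /andP[] := h5 w.
Qed.

End Model.

Lemma ln_diff_bound (R : realType) (al be c1 c2 : R) : 0 < al ->
  al <= c1 <= be -> al <= c2 <= be -> `|ln c1 - ln c2| <= (be - al) / al.
Proof.
wlog: c1 c2 / c1 <= c2.
  move=> H ha h1 h2; case: (leP c1 c2) => c12; first exact: H.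
  by rewrite distrC; apply: H => //; exact: ltW.
move=> c12 a0 /andP[a1 b1] /andP[a2 b2].
have c10 : 0 < c1 := lt_le_trans a0 a1.
have c20 : 0 < c2 := lt_le_trans a0 a2.
set r := c2 / c1.
have rc : r * c1 = c2 by rewrite /r divfK // gt_eqF.
have r1 : 1 <= r by rewrite /r ler_pdivlMr // mul1r.
have r0 : 0 < r by apply: lt_le_trans r1.
have e : ln c2 = ln c1 + ln r by rewrite -lnM ?posrE // mulrC rc.
have hl : 0 <= ln r by exact: ln_ge0.
have hu : ln r <= r - 1.
  have := @le_ln1Dx R (r - 1); rewrite (addrC 1 (r - 1)) subrK; apply.
  lra.
have hr : r - 1 <= (be - al) / al.
  rewrite ler_pdivlMr //; nra.
rewrite distrC ger0_norm; last by rewrite e; lra.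
rewrite e; lra.
Qed.

Unset Implicit Arguments.

Theorem lemma6 (R : realType) (d : measure_display) (V : measurableType d)
  (X : choiceType) (piV : probability V R) (K : nat -> X -> V -> V -> R)
  (nu : nat -> R)
  (HKmeas : forall i x, (1 <= i)%N ->
     measurable_fun setT (fun vw : V * V => K i x vw.1 vw.2))
  (HKprob : forall i v w, (1 <= i)%N ->
     (\esum_(x in [set: X]) (K i x v w)%:E = 1)%E)
  (Hnu : forall i, (1 <= i)%N -> 0 < nu i)
  (H2 : forall i x v w, (1 <= i)%N -> nu i <= K i x v w <= 1)
  (x : nat -> X) (n : nat) :
  (forall q, (1 <= q)%N -> (q <= n - 1)%N ->
     `| ln (cond_prob piV K x q n) | <= ln (nu q)^-1)
  /\
  (forall l q, (1 <= l)%N -> (1 <= q)%N -> (q <= n - 1)%N ->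
     `| ln (cond_prob piV K x q n) - ln (cond_prob piV K x q (n + l)) |
       <= (nu q)^-1 * \prod_(q.+1 <= k < n) (1 - nu k)).
Proof.
have CB := @cond_bounds R d V piV X K nu HKmeas Hnu H2 x.
split.
- move=> q q1 qn.
  have qn' : (q < n)%N by lia.
  have [al [be [h1 h2 h3 h4 h5]]] := CB q n q1 qn'.
  have /andP[c1 c2] := h5 n (leqnn n).
  have nq0 := Hnu q q1.
  have c0 : 0 < cond_prob piV K x q n by apply: lt_le_trans nq0 (le_trans h1 c1).
  rewrite ler0_norm; last by apply: ln_le0; rewrite (le_trans c2) // (le_trans h2 h3).
  rewrite lnV ?posrE // lerN2 ler_ln ?posrE //; exact: le_trans h1 c1.
- move=> l q l1 q1 qn.
  have qn' : (q < n)%N by lia.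
  have [al [be [h1 h2 h3 h4 h5]]] := CB q n q1 qn'.
  have nq0 := Hnu q q1.
  have al0 : 0 < al := lt_le_trans nq0 h1.
  have hb := ln_diff_bound _ _ _ _ _ al0 (h5 n (leqnn n)) (h5 (n + l)%N (leq_addr l n)).
  apply: le_trans hb _.
  set Pr := \prod_(q.+1 <= k < n) (1 - nu k) in h4 *.
  rewrite [(nu q)^-1 * _]mulrC ler_pdivlMr //.
  set z := (be - al) / al.
  have zal : z * al = be - al by rewrite /z divfK // gt_eqF.
  have z0 : 0 <= z by rewrite /z divr_ge0 // ?subr_ge0 // ltW.
  nra.
Qed.
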